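(* Let $\alpha=(\alpha_\pi)_{\pi\in\mathcal P}$ and $\beta=(\beta_\pi)_{\pi\in\mathcal P}$ be admissible families of weights. Then $\alpha=\beta$ if and only if $\alpha_\sigma=\beta_\sigma$ for every partition $\sigma\in\mathcal P$ with exactly two blocks.
   Context: Fix a finite set $\mathcal F$ of faces. For a word $\mathbf f\in\mathcal F^n$ ($n\ge1$), $[n]_{\mathbf f}$ is $\{1,\dots,n\}$ with faces $\ell\mapsto\mathbf f(\ell)$ (elements are called legs); $\mathcal P(\mathbf f)$ is the set of set partitions of $[n]$, viewed with these faces, and $\mathcal P=\bigcup_{\mathbf f}\mathcal P(\mathbf f)$. A finite totally ordered set $S$ with a face map is identified with $[m]_{|S|}$ through the order-preserving bijection ($|S|$ = word of faces read in order), so partitions of such sets (e.g. of a subset of $[n]$ with restricted faces, or of a quotient) are elements of $\mathcal P$. $1_{\mathbf f}$ is the one-block partition. For blocks $\beta_1\ne\beta_2$ of $\pi$, $\pi_{\beta_1\smile\beta_2}=(\pi\setminus\{\beta_1,\beta_2\})\cup\{\beta_1\cup\beta_2\}$, and $\{\beta_1,\beta_2\}$ is regarded as a partition of the multi-faced set $\beta_1\cup\beta_2$. Reduction: for $\pi\in\mathcal P(\mathbf f)$ let $s\sim t$ ($s\le t$) iff all $r\in[s,t]$ have the same face and lie in the same block; $\pi_{\mathrm{red}}$ is the induced partition of the quotient $[n]/\sim$ (classes are intervals, ordered naturally, with their common face). Mirror: $\overline{\mathbf f}(i)=\mathbf f(n+1-i)$, $\overline\pi=\{\{n+1-i:i\in\beta\}:\beta\in\pi\}\in\mathcal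 P(\overline{\mathbf f})$. A family $\alpha=(\alpha_\pi)_{\pi\in\mathcal P}$ of complex numbers is admissible if: (i) $\alpha_{1_{\mathbf f}}=1$ for all $\mathbf f$; (ii) $\alpha_{\{\{1\},\{2\}\}}=1$ for every $\mathbf f\in\mathcal F^2$; (iii) $\alpha_\pi=\alpha_{\pi_{\mathrm{red}}}$; (iv) if $\pi\in\mathcal P(\mathbf f)$ has blocks $\beta_1\ne\beta_2$ with $i\in\beta_1$, $i+1\in\beta_2$, $\mathbf f(i)=\mathbf f(i+1)$, then $\alpha_\pi=\alpha_{\pi_{\beta_1\smile\beta_2}}\alpha_{\{\beta_1,\beta_2\}}$; (v) $\alpha_\pi=\alpha_\sigma$ whenever $\pi\in\mathcal P(\mathbf f)$, $\sigma\in\mathcal P(\mathbf g)$ have the same underlying set partition of $[n]$ and $\mathbf f(\ell)=\mathbf g(\ell)$ for $1<\ell<n$; (vi) $\alpha_{\overline\pi}=\overline{\alpha_\pi}$. *)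

(* Defs.v *)
From mathcomp Require Import all_boot all_order all_algebra.
From mathcomp.real_closed Require Import complex.
From mathcomp Require Import Rstruct.
Set Implicit Arguments.
Unset Strict Implicit.
Unset Printing Implicit Defensive.
Import GRing.Theory Num.Theory.
Local Open Scope ring_scope.

Definition Cc : numClosedFieldType := (Rdefinitions.R)[i].

Section Partitions.
Variable F : finType. (* the finite set of faces *)

(** A word f in F^n is a finite function 'I_n -> F (position i is the
    (i+1)-th leg); a set partition of [n] is P : {set {set 'I_n}} with
    [partition P [set: 'I_n]]. The pair (f, P) is an element of P(f). *)
Definition is_part (n : nat) (P : {set {set 'I_n}}) : bool :=
  partition P [set: 'I_n].

(** A family of weights indexed by all (n, f, pi). Only the values at
    n >= 1 and pi a set partition of [n] are meaningful. *)
Definition weights := forall n : nat, {ffun 'I_n -> F} -> {set {set 'I_n}} -> Cc.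

Definition pullf (m n : nat) (g : 'I_m -> 'I_n) (f : {ffun 'I_n -> F})
  : {ffun 'I_m -> F} := [ffun k => f (g k)].
Definition pull (m n : nat) (g : 'I_m -> 'I_n) (P : {set {set 'I_n}})
  : {set {set 'I_m}} := [set [set k : 'I_m | g k \in B] | B : {set 'I_n} in P] :\ set0.

(** order-preserving bijection [m]_{|S|} -> S for a subset S of [n] *)
Definition sub_emb (n : nat) (S : {set 'I_n}) : 'I_#|S| -> 'I_n :=
  fun k => enum_val k.
Arguments sub_emb {n} S k.

(** i starts a ~-class iff it is not the case that i-1 exists with the same
    face and in the same block as i. Classes of ~ are maximal intervals, and
    each is represented by its first element. *)
Definition red_start (n : nat) (f : {ffun 'I_n -> F}) (P : {set {set 'I_n}})
  (i : 'I_n) : bool :=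
  ~~ [exists j : 'I_n, [&& (j.+1 == i :> nat), f j == f i &
                           pblock P j == pblock P i]].
Definition red_set (n : nat) (f : {ffun 'I_n -> F}) (P : {set {set 'I_n}})
  : {set 'I_n} := [set i | red_start f P i].
Definition red_map (n : nat) (f : {ffun 'I_n -> F}) (P : {set {set 'I_n}})
  : 'I_#|red_set f P| -> 'I_n := sub_emb (red_set f P).

Definition merge (n : nat) (P : {set {set 'I_n}}) (b1 b2 : {set 'I_n})
  : {set {set 'I_n}} := (P :\ b1 :\ b2) :|: [set b1 :|: b2].

Arguments is_part {n} P.
Arguments pullf {m n} g f.
Arguments pull {m n} g P.
Arguments red_start {n} f P i.
Arguments red_set {n} f P.
Arguments red_map {n} f P _.
Arguments merge {n} P b1 b2.

Definition admissible (a : weights) : Prop :=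
  (* (i) *)
  (forall (n : nat) (f : {ffun 'I_n -> F}), (0 < n)%N -> a n f [set setT] = 1)
  /\
  (forall f : {ffun 'I_2 -> F}, a 2 f [set [set ord0]; [set ord_max]] = 1)
  /\
  (* (iii) *)
  (forall (n : nat) (f : {ffun 'I_n -> F}) (P : {set {set 'I_n}}),
     (0 < n)%N -> is_part P ->
     a n f P = a _ (pullf (red_map f P) f) (pull (red_map f P) P))
  /\
  (* (iv) *)
  (forall (n : nat) (f : {ffun 'I_n -> F}) (P : {set {set 'I_n}})
          (b1 b2 : {set 'I_n}) (i j : 'I_n),
     (0 < n)%N -> is_part P -> b1 \in P -> b2 \in P -> b1 != b2 ->
     i \in b1 -> j \in b2 -> (j : nat) = i.+1 -> f i = f j ->
     a n f P = a n f (merge P b1 b2) *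
               a _ (pullf (sub_emb (b1 :|: b2)) f)
                   (pull (sub_emb (b1 :|: b2)) [set b1; b2]))
  /\
  (* (v) : positions 2..n-1 (1-based) are positions 1..n-2 (0-based) *)
  (forall (n : nat) (f g : {ffun 'I_n -> F}) (P : {set {set 'I_n}}),
     (0 < n)%N -> is_part P ->
     (forall l : 'I_n, (0 < l)%N -> (l < n.-1)%N -> f l = g l) ->
     a n f P = a n g P)
  /\
  (forall (n : nat) (f : {ffun 'I_n -> F}) (P : {set {set 'I_n}}),
     (0 < n)%N -> is_part P ->
     a n (pullf (@rev_ord n) f) (pull (@rev_ord n) P) = (a n f P)^*).

End Partitions.

(* Main.v *)
Require Import Defs.
From mathcomp Require Import all_boot all_order all_algebra zify.
From mathcomp.real_closed Require Import complex.


Set Implicit Arguments.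
Unset Strict Implicit.
Import GRing.Theory Num.Theory.

Lemma pull_part (m n : nat) (g : 'I_m -> 'I_n) (P : {set {set 'I_n}}) D :
  partition P D -> (forall k, g k \in D) -> partition (pull g P) [set: 'I_m].
Proof.
move=> pP gD; have tP := partition_trivIset pP; have cP := cover_partition pP.
apply/and3P; split.
- apply/eqP/setP => k; rewrite in_setT; apply/bigcupP.
  have : g k \in cover P by rewrite cP.
  move/bigcupP=> [B PB gB]; exists [set k0 | g k0 \in B]; last by rewrite inE.
  rewrite /pull !inE; apply/andP; split; first by apply/set0Pn; exists k; rewrite inE.
  by apply/imsetP; exists B.
- apply/trivIsetP => A A'; rewrite /pull !inE => /andP[_ /imsetP[B PB ->]]
    /andP[_ /imsetP[B' PB' ->]] neq.
  have nB : B != B' by apply: contraNneq neq => ->.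
  have := (trivIsetP tP) B B' PB PB' nB.
  rewrite -!setI_eq0 => /eqP dis; apply/eqP/setP => k; rewrite !inE.
  apply/negP => /andP[h1 h2].
  have : g k \in B :&: B' by rewrite inE h1 h2.
  by rewrite dis inE.
- by rewrite /pull setD11.
Qed.

Lemma merge_part n (P : {set {set 'I_n}}) b1 b2 :
  is_part P -> b1 \in P -> b2 \in P -> b1 != b2 ->
  is_part (Defs.merge P b1 b2) /\ (#|Defs.merge P b1 b2| < #|P|)%N.
Proof.
move=> pP P1 P2 neq; split.
- have p1 := partitionD1 pP P1.
  have P2' : b2 \in P :\ b1 by rewrite !inE eq_sym neq P2.
  have p2 := partitionD1 p1 P2'.
  have ne : b1 :|: b2 != set0.
    apply/set0Pn; have /set0Pn[x x1] := partition_neq0 pP P1.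
    by exists x; rewrite inE x1.
  have dis : [disjoint b1 :|: b2 & [set: 'I_n] :\: b1 :\: b2].
    by rewrite -setI_eq0; apply/eqP/setP => x; rewrite !inE; case: (x \in b1); case: (x \in b2).
  have := partitionU1 p2 ne dis.
  have -> : b1 :|: b2 :|: ([set: 'I_n] :\: b1 :\: b2) = [set: 'I_n].
    by apply/setP => x; rewrite !inE; case: (x \in b1); case: (x \in b2).
  by rewrite /Defs.merge setUC.
- rewrite /Defs.merge (cardsD1 b1 P) P1 (cardsD1 b2 (P :\ b1)) !inE eq_sym neq P2 /=.
  have := leq_card_setU (P :\ b1 :\ b2) [set b1 :|: b2]; rewrite cards1 => -[h _].
  by apply: (leq_trans h); rewrite addnC.
Qed.

Lemma small_part n (P : {set {set 'I_n}}) :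
  is_part P -> (n <= 1)%N -> (#|P| <= 1)%N.
Proof.
move=> pP n1; rewrite -(cards1 [set: 'I_n]); apply: subset_leq_card.
apply/subsetP => B PB; rewrite inE; apply/eqP/setP => y; rewrite inE.
have /set0Pn[x xB] := partition_neq0 pP PB.
suff -> : y = x by [].
apply: ord_inj; have := ltn_ord x; have := ltn_ord y; lia.
Qed.

Lemma pair_part n (P : {set {set 'I_n}}) c1 c2 :
  is_part P -> c1 \in P -> c2 \in P -> c1 != c2 ->
  partition [set c1; c2] (c1 :|: c2).
Proof.
move=> pP P1 P2 neq.
have p2 : partition [set c2] c2.
  by rewrite /partition cover1 eqxx trivIset1 inE eq_sym (partition_neq0 pP P2).
apply: partitionU1 p2 (partition_neq0 pP P1) _.
exact: (trivIsetP (partition_trivIset pP)).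
Qed.

Lemma pair_card n (P : {set {set 'I_n}}) c1 c2 (x1 x2 : 'I_n) :
  is_part P -> c1 \in P -> c2 \in P -> c1 != c2 -> x1 \in c1 -> x2 \in c2 ->
  #|pull (@sub_emb _ (c1 :|: c2)) [set c1; c2]| = 2.
Proof.
move=> pP P1 P2 neq x1c x2c.
have dis := (trivIsetP (partition_trivIset pP)) c1 c2 P1 P2 neq.
have S1 : x1 \in c1 :|: c2 by rewrite inE x1c.
have S2 : x2 \in c1 :|: c2 by rewrite inE x2c orbT.
set k1 := enum_rank_in S1 x1.
set k2 := enum_rank_in S1 x2.
have e1 : @sub_emb _ (c1 :|: c2) k1 = x1 by rewrite /sub_emb /k1 enum_rankK_in.
have e2 : @sub_emb _ (c1 :|: c2) k2 = x2 by rewrite /sub_emb /k2 enum_rankK_in.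
have x1n : x1 \notin c2.
  apply/negP => h; move: dis; rewrite -setI_eq0 => /eqP/setP/(_ x1).
  by rewrite !inE x1c h.
set A1 := [set k | @sub_emb _ (c1 :|: c2) k \in c1].
set A2 := [set k | @sub_emb _ (c1 :|: c2) k \in c2].
have A1n : A1 != A2.
  by apply/negP => /eqP/setP/(_ k1); rewrite !inE e1 x1c (negbTE x1n).
have in1 : A1 \in pull (@sub_emb _ (c1 :|: c2)) [set c1; c2].
  rewrite /pull !inE; apply/andP; split.
    by apply/set0Pn; exists k1; rewrite inE e1.
  by apply/imsetP; exists c1; rewrite ?inE ?eqxx.
have in2 : A2 \in pull (@sub_emb _ (c1 :|: c2)) [set c1; c2].
  rewrite /pull !inE; apply/andP; split.
    by apply/set0Pn; exists k2; rewrite inE e2.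
  by apply/imsetP; exists c2; rewrite ?inE ?eqxx ?orbT.
apply/eqP; rewrite eqn_leq; apply/andP; split.
  apply: (leq_trans (subset_leq_card (subsetDl _ _))).
  apply: (leq_trans (leq_imset_card _ _)).
  by rewrite cards2; case: (c1 != c2).
have c2e := cards2 A1 A2; rewrite A1n in c2e; rewrite -c2e; apply: subset_leq_card.
by apply/subsetP => A; rewrite in_set2 => /orP[] /eqP ->.
Qed.

Local Open Scope ring_scope.

Theorem lemma6p3 (F : finType) (alpha beta : weights F) :
  admissible alpha -> admissible beta ->
  ((forall (n : nat) (f : {ffun 'I_n -> F}) (P : {set {set 'I_n}}),
      (0 < n)%N -> is_part P -> alpha n f P = beta n f P)
   <->
   (forall (n : nat) (f : {ffun 'I_n -> F}) (P : {set {set 'I_n}}),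
      (0 < n)%N -> is_part P -> (#|P| = 2)%N -> alpha n f P = beta n f P)).
Proof.
move=> [a1 [a2 [a3 [a4 [a5 a6]]]]] [b1 [b2 [b3 [b4 [b5 b6]]]]].
split=> [H n f P n0 pP _|H]; first exact: H.
elim/ltn_ind => n IHn.
have IHk : forall k (f : {ffun 'I_n -> F}) (P : {set {set 'I_n}}),
    #|P| = k -> (0 < n)%N -> is_part P -> alpha n f P = beta n f P.
  elim/ltn_ind => k IHk f P Pk n0 pP.
  have cP := cover_partition pP.
  have [le2|gt2] := leqP #|P| 2.
    move: le2; rewrite leq_eqVlt ltnS leq_eqVlt ltnS leqn0 => /or3P[/eqP h|/eqP h|/eqP h].
    - exact: H.
    - have /cards1P[B PB] : #|P| == 1%N by rewrite h.
      have cB : B = setT by move: cP; rewrite PB cover1.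
      by rewrite PB cB a1 ?b1.
    - move: cP; rewrite (cards0_eq h) => /setP/(_ (Ordinal n0)).
      by rewrite /cover big_set0 !inE.
  have n1 : (1 < n)%N.
    rewrite ltnNge; apply/negP => /(small_part pP); rewrite leqNgt => /negP; apply.
    by apply: leq_trans gt2.
  pose i0 : 'I_n := Ordinal n0.
  pose i1 : 'I_n := Ordinal n1.
  have i10 : i1 != i0 by apply/eqP => /(congr1 val).
  pose g := [ffun k : 'I_n => if k == i0 then f i1 else f k].
  have fg : forall l : 'I_n, (0 < l)%N -> (l < n.-1)%N -> f l = g l.
    move=> l l0 _; rewrite ffunE ifN //; apply/negP => /eqP/(congr1 val) /= h.
    by rewrite h in l0.
  rewrite (a5 n f g P n0 pP fg) (b5 n f g P n0 pP fg).
  have Pc1 : pblock P i0 \in P by apply: pblock_mem; rewrite cP inE.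
  have Pc2 : pblock P i1 \in P by apply: pblock_mem; rewrite cP inE.
  have c1i0 : i0 \in pblock P i0 by rewrite mem_pblock cP inE.
  have c2i1 : i1 \in pblock P i1 by rewrite mem_pblock cP inE.
  have gg : g i0 = g i1 by rewrite !ffunE eqxx (negbTE i10).
  have [e|ne] := eqVneq (pblock P i0) (pblock P i1).
    rewrite (a3 n g P n0 pP) (b3 n g P n0 pP); apply: IHn.
    - have nr : i1 \notin red_set g P.
        by rewrite inE /red_start negbK; apply/existsP; exists i0; rewrite gg e !eqxx.
      rewrite -[X in (_ < X)%N]card_ord -cardsT; apply: proper_card.
      by rewrite properT; apply: contraNneq nr => ->; rewrite inE.
    - rewrite card_gt0; apply/set0Pn; exists i0; rewrite inE /red_start.
      by apply/existsP => -[j /and3P[h _ _]].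
    - by apply: (pull_part pP) => ?; rewrite inE.
  rewrite (a4 n g P _ _ i0 i1 n0 pP Pc1 Pc2 ne c1i0 c2i1 erefl gg).
  rewrite (b4 n g P _ _ i0 i1 n0 pP Pc1 Pc2 ne c1i0 c2i1 erefl gg).
  have [pm cm] := merge_part pP Pc1 Pc2 ne.
  rewrite (IHk _ _ g _ erefl n0 pm); last by rewrite -Pk.
  rewrite (H #|pblock P i0 :|: pblock P i1|) //.
  - by rewrite card_gt0; apply/set0Pn; exists i0; rewrite inE c1i0.
  - by apply: (pull_part (pair_part pP Pc1 Pc2 ne)) => ?; exact: enum_valP.
  - exact: (pair_card pP Pc1 Pc2 ne c1i0 c2i1).
move=> f P n0 pP; exact: (IHk _ f P erefl n0 pP).
Qed.
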